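(* Let $f$ be a nonconstant harmonic function on $K$. Among all junction points $x$ lying on the contour $[p_0,p_1]\cup[p_0,p_2]\cup[p_1,p_2]$ of $G_0$, there is at most one at which the normal derivative of $f$ (with respect to some cell having $x$ as a vertex) vanishes. Moreover, such an exceptional point exists and is a vertex of $G_0$ if and only if the restrictions of $f$ to all three edges of $G_0$ are monotone.
   Context: Let $p_0,p_1,p_2$ be the vertices of a unit equilateral triangle in $\mathbb{R}^2$, $F_i(x)=(x+p_i)/2$, and $K$ the Sierpinski gasket (the attractor of $F_0,F_1,F_2$). For a word $w$ of length $m$, $F_w=F_{w_1}\circ\cdots\circ F_{w_m}$ and $C_w=F_w(K)$ is a cell of level $m$ with vertices $F_w(p_0),F_w(p_1),F_w(p_2)$; the minimal triangles of $G_m$ are the triangles with these vertices. Junction points are the points of $\bigcup_m\bigcup_{|w|=m}\{F_w(p_0),F_w(p_1),F_w(p_2)\}$. A continuous $f:K\to\mathbb{R}$ is harmonic if for every $m\ge0$ and every minimal triangle of $G_m$ with vertices $v_i,v_j,v_k$, the value at the midpoint $v_{ij}$ of $[v_i,v_j]$ is $\frac15(2f(v_i)+2f(v_j)+f(v_k))$. For a harmonic $f$, a junction point $x=F_w(p_i)$ and the cell $C_w$ (with other vertices $y=F_w(p_j)$, $z=F_w(p_k)$), the normal derivative of $f$ at $x$ with respect to $C_w$ is $\partial_n f(x)=(5/3)^{|w|}\big(2f(x)-f(y)-f(z)\big)$ (this value does not change if $C_w$ is replaced by a smaller cell $C_{wi\cdots i}$ having $x$ as a vertex). Monotonicity of restrictions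 to edges refers to a linear parametrization of each edge. *)

(* Defs.v *)
From HB Require Import structures.
From mathcomp Require Import all_boot all_order all_algebra.
From mathcomp Require Import all_classical all_reals all_analysis.
Set Implicit Arguments. Unset Strict Implicit. Unset Printing Implicit Defensive.
Import Order.TTheory GRing.Theory Num.Theory.
Import numFieldNormedType.Exports.
Local Open Scope ring_scope.
Local Open Scope classical_set_scope.

Definition vtx {R : realType} (i : 'I_3) : R * R :=
  if (i : nat) == 0%N then (0, 0)
  else if (i : nat) == 1%N then (1, 0)
  else (1 / 2, Num.sqrt 3 / 2).

Definition Fmap {R : realType} (i : 'I_3) (x : R * R) : R * R :=
  ((x.1 + (vtx i).1) / 2, (x.2 + (vtx i).2) / 2).

Definition Fw {R : realType} (w : seq 'I_3) (x : R * R) : R * R :=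
  foldr (@Fmap R) x w.

Definition midpt {R : realType} (x y : R * R) : R * R :=
  ((x.1 + y.1) / 2, (x.2 + y.2) / 2).

Definition segpt {R : realType} (a b : R * R) (t : R) : R * R :=
  ((1 - t) * a.1 + t * b.1, (1 - t) * a.2 + t * b.2).

(* K is the Sierpinski gasket: the attractor of F_0, F_1, F_2, i.e. the
   (unique) nonempty compact set with K = F_0(K) u F_1(K) u F_2(K). *)
Definition SG_attractor {R : realType} (K : set (R * R)) : Prop :=
  [/\ compact K, K !=set0 &
      K = \bigcup_(i in [set: 'I_3]) (@Fmap R i @` K)].

(* harmonic: continuous on K and the 2-2-1 / 5 midpoint rule on every
   minimal triangle of every G_m *)
Definition sg_harmonic {R : realType} (K : set (R * R)) (f : R * R -> R) : Prop :=
  {within K, continuous f} /\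
  forall (w : seq 'I_3) (i j k : 'I_3), i != j -> j != k -> i != k ->
    f (midpt (Fw w (vtx i)) (Fw w (vtx j))) =
    (2 * f (Fw w (vtx i)) + 2 * f (Fw w (vtx j)) + f (Fw w (vtx k))) / 5.

Definition junction_point {R : realType} (x : R * R) : Prop :=
  exists (w : seq 'I_3) (i : 'I_3), x = Fw w (vtx i).

Definition on_contour {R : realType} (x : R * R) : Prop :=
  exists (a b : 'I_3), a != b /\
    exists t : R, 0 <= t <= 1 /\ x = segpt (vtx a) (vtx b) t.

Definition normal_derivative {R : realType} (f : R * R -> R)
    (w : seq 'I_3) (i : 'I_3) : R :=
  (5 / 3) ^+ size w *
  (2 * f (Fw w (vtx i)) - \sum_(l < 3 | l != i) f (Fw w (vtx l))).

Definition nd_vanishes {R : realType} (f : R * R -> R) (x : R * R) : Prop :=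
  exists (w : seq 'I_3) (i : 'I_3),
    Fw w (vtx i) = x /\ normal_derivative f w i = 0.

Definition edge_monotone {R : realType} (f : R * R -> R) (a b : 'I_3) : Prop :=
  (forall s t : R, 0 <= s -> s <= t -> t <= 1 ->
     f (segpt (vtx a) (vtx b) s) <= f (segpt (vtx a) (vtx b) t)) \/
  (forall s t : R, 0 <= s -> s <= t -> t <= 1 ->
     f (segpt (vtx a) (vtx b) t) <= f (segpt (vtx a) (vtx b) s)).

(* Main.v *)
Require Import Defs.
From HB Require Import structures.
From mathcomp Require Import all_boot all_order all_algebra.
From mathcomp Require Import all_classical all_reals all_analysis.
From mathcomp Require Import ring lra zify.
Import Order.TTheory GRing.Theory Num.Theory.
Import numFieldNormedType.Exports.
Local Open Scope ring_scope.
Local Open Scope classical_set_scope.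

Set Implicit Arguments. Unset Strict Implicit. Unset Printing Implicit Defensive.

Lemma ord3_pred (l i j k : 'I_3) : i != j -> j != k -> i != k ->
  ((l != i) && (l != j)) = (l == k).
Proof.
move: l i j k => [l Hl] [i Hi] [j Hj] [k Hk]; rewrite -!val_eqE /=.
move=> h1 h2 h3; apply/idP/idP; lia.
Qed.

Lemma third (i j : 'I_3) : i != j -> exists k : 'I_3, j != k /\ i != k.
Proof.
move=> hij.
exists (inord (3 - i - j)); rewrite -!val_eqE /= inordK; move: hij; rewrite -val_eqE;
 case: i j => [i Hi] [j Hj] /=; lia.
Qed.

Lemma sz_lem (p q n : nat) : (p.+1 + q.+1 <= n.+1)%N -> (p + q <= n)%N.
Proof. lia. Qed.

Section Alg.
Variable R : realType.
Implicit Types (g : R * R -> R).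

Lemma sum3 (F : 'I_3 -> R) (i j k : 'I_3) : i != j -> j != k -> i != k ->
  \sum_(l < 3) F l = F i + F j + F k.
Proof.
move=> h1 h2 h3.
rewrite (bigD1 i) //= (bigD1 j) /=; last by rewrite eq_sym h1.
rewrite (eq_bigl (pred1 k)); first by rewrite big_pred1_eq addrA.
by move=> l /=; exact: ord3_pred.
Qed.

Lemma sum_neq (F : 'I_3 -> R) (i : 'I_3) :
  \sum_(l < 3 | l != i) F l = \sum_(l < 3) F l - F i.
Proof. by rewrite [in RHS](bigD1 i) //= addrC addrK. Qed.


Definition Hm g := forall (w : seq 'I_3) (i j k : 'I_3), i != j -> j != k -> i != k ->
    g (midpt (Fw w (vtx i)) (Fw w (vtx j))) =
    (2 * g (Fw w (vtx i)) + 2 * g (Fw w (vtx j)) + g (Fw w (vtx k))) / 5.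
Definition Sg g := \sum_(l < 3) g (vtx l).
Definition nd g (i : 'I_3) := 3 * g (vtx i) - Sg g.

Lemma Fmap_midpt c (x y : R * R) : Fmap c (midpt x y) = midpt (Fmap c x) (Fmap c y).
Proof. rewrite /Fmap /midpt /=; by congr pair; by field. Qed.

Lemma Fw_midpt w (x y : R * R) : Fw w (midpt x y) = midpt (Fw w x) (Fw w y).
Proof. by elim: w => //= c w IH; rewrite IH Fmap_midpt. Qed.

Lemma Fmap_fix c : Fmap c (vtx c) = (vtx c : R * R).
Proof. rewrite /Fmap; case: (vtx c) => a b /=; by congr pair; by field. Qed.

Lemma midpt_vtx i j : midpt (vtx i) (vtx j) = (Fmap i (vtx j) : R * R).
Proof. by rewrite /Fmap /midpt; congr pair; rewrite addrC. Qed.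

Lemma Hm_comp c g : Hm g -> Hm (g \o Fmap c).
Proof. by move=> H w i j k h1 h2 h3; rewrite /= Fmap_midpt; apply: (H (c :: w)). Qed.

Lemma Hm_compw w g : Hm g -> Hm (g \o Fw w).
Proof.
elim: w g => [|c w IH] g H; first by [].
exact (IH (g \o Fmap c) (Hm_comp c H)).
Qed.

Lemma child_val g c l : Hm g -> (g \o Fmap c) (vtx l) =
  if l == c then g (vtx c) else (g (vtx c) + g (vtx l) + Sg g) / 5.
Proof.
move=> H /=; case: eqP => [->|/eqP hlc]; first by rewrite Fmap_fix.
have hcl : c != l by rewrite eq_sym.
have [k [h2 h3]] := third hcl.
rewrite -midpt_vtx (H [::] c l k) //= /Sg (sum3 _ hcl h2 h3).
by field.
Qed.

Lemma Sg_child g c : Hm g -> Sg (g \o Fmap c) = (6 * g (vtx c) + 3 * Sg g) / 5.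
Proof.
move=> H.
have [l hcl] : exists l : 'I_3, c != l.
  by exists (inord (if (c : nat) == 0%N then 1 else 0)); rewrite -val_eqE /= inordK; case: c => [[|c] Hc] /=.
have [k [h2 h3]] := third hcl.
rewrite /Sg !(sum3 _ hcl h2 h3) !child_val // eqxx !(eq_sym _ c) (negbTE hcl) (negbTE h3) /Sg (sum3 _ hcl h2 h3).
by field.
Qed.

Lemma nd_child_same g c : Hm g -> nd (g \o Fmap c) c = 3 / 5 * nd g c.
Proof. by move=> H; rewrite /nd Sg_child // child_val // eqxx; by field. Qed.

Lemma nd_child_other g c l : Hm g -> l != c -> nd (g \o Fmap c) l = (nd g l - nd g c) / 5.
Proof. by move=> H hl; rewrite /nd Sg_child // child_val // (negbTE hl); by field. Qed.

Lemma nd_sum g : \sum_(l < 3) nd g l = 0.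
Proof. by rewrite /nd big_split /= -big_distrr /= sumr_const card_ord /Sg; ring. Qed.


Definition onedge (a b : 'I_3) (w : seq 'I_3) := all (fun c => (c == a) || (c == b)) w.

Lemma noZero a b : a != b -> forall w g e, Hm g -> nd g a * nd g b < 0 ->
  onedge a b w -> (e == a) || (e == b) -> nd (g \o Fw w) e != 0.
Proof.
move=> hab; elim=> [|c w IH] g e H hp /=.
  move=> _ /orP[] /eqP -> /=; apply/eqP => h0; move: hp; rewrite h0 ?mulr0 ?mul0r ltxx //.
have hba : b != a by rewrite eq_sym.
case/andP => /orP[] /eqP -> hw he.
- apply: (IH (g \o Fmap a)) => //; first exact: Hm_comp.
  rewrite nd_child_same // nd_child_other //; nra.
- apply: (IH (g \o Fmap b)) => //; first exact: Hm_comp.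
  rewrite nd_child_same // nd_child_other //; nra.
Qed.

Lemma child_nz g a b c : Hm g -> a != b -> (c == a) || (c == b) ->
  0 < nd g a ^+ 2 + nd g b ^+ 2 ->
  0 < nd (g \o Fmap c) a ^+ 2 + nd (g \o Fmap c) b ^+ 2.
Proof.
move=> H hab /orP[] /eqP -> hp; have hba : b != a by rewrite eq_sym.
- rewrite nd_child_same // nd_child_other //; nra.
- rewrite nd_child_same // nd_child_other //; nra.
Qed.


Lemma Fmap_swap (x y : 'I_3) : Fmap x (vtx y) = (Fmap y (vtx x) : R * R).
Proof. by rewrite -!midpt_vtx /midpt; congr pair; rewrite addrC. Qed.

Lemma zero_nonneg a b w g e : a != b -> Hm g -> onedge a b w -> (e == a) || (e == b) ->
  nd (g \o Fw w) e = 0 -> 0 <= nd g a * nd g b.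
Proof.
move=> hab H hw he h0; rewrite leNgt; apply/negP => hlt.
by move: (noZero hab H hlt hw he); rewrite h0 eqxx.
Qed.


Definition UP (a b : 'I_3) (n : nat) := forall g (w w' : seq 'I_3) (e e' : 'I_3),
  Hm g -> 0 < nd g a ^+ 2 + nd g b ^+ 2 ->
  (size w + size w' <= n)%N -> onedge a b w -> onedge a b w' ->
  (e == a) || (e == b) -> (e' == a) || (e' == b) ->
  nd (g \o Fw w) e = 0 -> nd (g \o Fw w') e' = 0 -> Fw w (vtx e) = (Fw w' (vtx e') : R * R).

Lemma uniq_nil a b n g e w' e' : UP a b n ->
  a != b -> Hm g -> 0 < nd g a ^+ 2 + nd g b ^+ 2 -> (size w' <= n.+1)%N -> onedge a b w' ->
  (e == a) || (e == b) -> (e' == a) || (e' == b) ->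
  nd g e = 0 -> nd (g \o Fw w') e' = 0 -> vtx e = (Fw w' (vtx e') : R * R).
Proof.
move=> IH hab H hp hsz hw' he he' h0 h0'.
have hba : b != a by rewrite eq_sym.
case: w' hw' h0' hsz => [|c w0] hw' h0' hsz.
  move: he he' h0 h0' hp => /orP[] /eqP -> /orP[] /eqP -> //= h1 h2; rewrite h1 h2 expr0n /= addr0 ltxx //.
move: hw' => /= /andP[hc hw0].
have hHc := Hm_comp c H.
have hpc := child_nz H hab hc hp.
move: he h0 hp hpc => /orP[] /eqP -> h0 hp hpc; move: hc => /orP[] /eqP ec; subst c.
- have -> : Fw w0 (vtx e') = (vtx a : R * R).
    apply: esym; apply: (IH (g \o Fmap a) [::] w0 a e' hHc hpc _ _ hw0 _ he' _ h0') => //.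
    + by rewrite eqxx ?orbT.
    + by rewrite /= nd_child_same // h0 mulr0.
  by rewrite Fmap_fix.
- have := zero_nonneg hab (Hm_comp b H) hw0 he' h0'.
  rewrite nd_child_same // nd_child_other // h0 => hh.
  have : nd g b = 0 by nra.
  by move=> hb; move: hp; rewrite h0 hb expr0n /= addr0 ltxx.
- have := zero_nonneg hab (Hm_comp a H) hw0 he' h0'.
  rewrite nd_child_same // nd_child_other // h0 => hh.
  have : nd g a = 0 by nra.
  by move=> hb; move: hp; rewrite h0 hb expr0n /= addr0 ltxx.
- have -> : Fw w0 (vtx e') = (vtx b : R * R).
    symmetry; apply: (IH (g \o Fmap b) [::] w0 b e' hHc hpc _ _ hw0 _ he' _ h0') => //.
    + by rewrite eqxx ?orbT.
    + by rewrite /= nd_child_same // h0 mulr0.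
  by rewrite Fmap_fix.
Qed.


Lemma sq_eq (p q : R) : 0 <= 3 / 5 * p * ((q - p) / 5) ->
  0 <= (p - q) / 5 * (3 / 5 * q) -> p = q.
Proof. move=> h1 h2; nra. Qed.

Lemma uniq_all a b n : a != b -> UP a b n.
Proof.
move=> hab; have hba : b != a by rewrite eq_sym.
elim: n => [|n IH] g w w' e e' H hp hsz hw hw' he he' h0 h0'.
  case: w hsz hw h0 => [|? ?] //; case: w' hw' h0' => [|? ?] //= hw' h0' _ hw h0.
  move: he he' h0 h0' hp => /orP[] /eqP -> /orP[] /eqP -> //= h1 h2; rewrite h1 h2 expr0n /= addr0 ltxx //.
have IH' : UP a b n by [].
case: w hsz hw h0 => [|c w0] hsz hw h0.
  by apply: (uniq_nil IH' hab H hp).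
case: w' hsz hw' h0' => [|c' w0'] hsz hw' h0'.
  apply: esym; apply: (uniq_nil IH' hab H hp) => //.
  by rewrite addn0 in hsz.
move: hw hw' => /= /andP[hc hw0] /andP[hc' hw0'].
have eq1 : forall x : 'I_3, (x == a) || (x == b) -> x != a -> x = b.
  by move=> x /orP[] /eqP -> //; rewrite eqxx.
case: (eqVneq c c') => [ecc|ncc].
  subst c'; rewrite /=; congr (Fmap c _).
  apply: (IH (g \o Fmap c) w0 w0' e e' (Hm_comp c H) (child_nz H hab hc hp)) => //.
  exact: sz_lem hsz.
have key : forall x y (w1 w2 : seq 'I_3) e1 e2, x != y -> (x == a) || (x == b) -> (y == a) || (y == b) ->
    (size w1 + size w2 <= n)%N -> onedge a b w1 -> onedge a b w2 ->
    (e1 == a) || (e1 == b) -> (e2 == a) || (e2 == b) ->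
    nd ((g \o Fmap x) \o Fw w1) e1 = 0 -> nd ((g \o Fmap y) \o Fw w2) e2 = 0 ->
    Fmap x (Fw w1 (vtx e1)) = (Fmap y (Fw w2 (vtx e2)) : R * R).
  move=> x y w1 w2 e1 e2 hxy hx hy hs hw1 hw2 he1 he2 z1 z2.
  have hyx : y != x by rewrite eq_sym.
  have nn1 := zero_nonneg hab (Hm_comp x H) hw1 he1 z1.
  have nn2 := zero_nonneg hab (Hm_comp y H) hw2 he2 z2.
  have hxyv : nd g x = nd g y.
    move: (hx) (hy) (hxy) nn1 nn2 => /orP[] /eqP -> /orP[] /eqP -> //; rewrite ?eqxx // => _;
    rewrite !nd_child_same // !nd_child_other //.
    + by move=> h1 h2; exact: sq_eq h1 h2.
    + by move=> h1 h2; apply: esym; exact: sq_eq h2 h1.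
  have hab_xy : (nd g a = nd g x /\ nd g b = nd g y) \/ (nd g a = nd g y /\ nd g b = nd g x).
    by move: (hx) (hy) (hxy) => /orP[] /eqP -> /orP[] /eqP -> //; rewrite ?eqxx //; auto.
  have E1 : Fw w1 (vtx e1) = (vtx y : R * R).
    apply: (IH (g \o Fmap x) w1 [::] e1 y (Hm_comp x H) (child_nz H hab hx hp)) => //.
    - by rewrite addn0; apply: leq_trans hs; rewrite leq_addr.
    - by rewrite /= nd_child_other // hxyv subrr mul0r.
  have E2 : Fw w2 (vtx e2) = (vtx x : R * R).
    apply: (IH (g \o Fmap y) w2 [::] e2 x (Hm_comp y H) (child_nz H hab hy hp)) => //.
    - by rewrite addn0; apply: leq_trans hs; rewrite leq_addl.
    - by rewrite /= nd_child_other // hxyv subrr mul0r.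
  by rewrite E1 E2 Fmap_swap.
apply: key => //.
exact: sz_lem hsz.
Qed.


Definition s3 : R := Num.sqrt 3.
Lemma s3_neq0 : s3 != 0.
Proof. by rewrite /s3 sqrtr_eq0 -ltNge. Qed.

Definition lam (k : 'I_3) (p : R * R) : R :=
  if (k : nat) == 0%N then 1 - p.1 - p.2 / s3
  else if (k : nat) == 1%N then p.1 - p.2 / s3 else 2 * p.2 / s3.

Lemma lam_vtx k c : lam k (vtx c) = (c == k)%:R.
Proof.
have h := s3_neq0.
rewrite /lam /vtx -val_eqE -/s3.
case: k c => [[|[|[|k]]] Hk] [[|[|[|c]]] Hc] //=; by field.
Qed.

Lemma lam_Fmap k c p : lam k (Fmap c p) = (lam k p + lam k (vtx c)) / 2.
Proof.
have h := s3_neq0.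
rewrite /lam /Fmap /=.
case: k => [[|[|[|k]]] Hk] //=; by field.
Qed.

Lemma lam_ge0 k w e : 0 <= lam k (Fw w (vtx e)).
Proof.
elim: w => [|c w IH] /=; first by rewrite lam_vtx ler0n.
by rewrite lam_Fmap lam_vtx divr_ge0 // addr_ge0.
Qed.

Lemma lam_eq0 k w e : lam k (Fw w (vtx e)) = 0 -> all (fun c => c != k) w && (e != k).
Proof.
elim: w => [|c w IH] /=.
  by rewrite lam_vtx => /eqP; rewrite pnatr_eq0 eqb0.
rewrite lam_Fmap lam_vtx => /eqP; rewrite mulf_eq0 invr_eq0 pnatr_eq0 orbF => /eqP h.
have h1 := lam_ge0 k w e.
have h2 : 0 <= (c == k)%:R :> R by rewrite ler0n.
have e1 : lam k (Fw w (vtx e)) = 0 by lra.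
have e2 : (c == k)%:R = 0 :> R by lra.
move: e2 => /eqP; rewrite pnatr_eq0 eqb0 => ->; exact: IH.
Qed.

Lemma lam_segpt k a b t : lam k (segpt (vtx a) (vtx b) t) =
  (1 - t) * (a == k)%:R + t * (b == k)%:R.
Proof.
rewrite -!lam_vtx.
have h := s3_neq0.
rewrite /lam /segpt /=.
case: k => [[|[|[|k]]] Hk] //=; by field.
Qed.

End Alg.

Section A2.
Variable R : realType.
Implicit Types (g : R * R -> R).

Lemma Hm_neg g : Hm g -> Hm (fun x => - g x).
Proof. by move=> H w i j k h1 h2 h3; rewrite (H w i j k) //; field. Qed.

Lemma nd_neg g i : nd (fun x => - g x) i = - nd g i.
Proof. by rewrite /nd /Sg sumrN; ring. Qed.

Lemma ndE g w i : normal_derivative g w i = (5 / 3) ^+ size w * nd (g \o Fw w) i.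
Proof. by rewrite /normal_derivative /nd /Sg sum_neq /=; congr (_ * _); ring. Qed.

Lemma nd_pow g i n : Hm g -> nd (g \o Fw (nseq n i)) i = (3 / 5) ^+ n * nd g i.
Proof.
elim: n g => [|n IH] g H; first by rewrite expr0 mul1r.
have := IH _ (Hm_comp i H); rewrite /= => ->.
by rewrite nd_child_same // exprS; ring.
Qed.

Lemma Fw_nseq_fix i n : Fw (nseq n i) (vtx i) = (vtx i : R * R).
Proof. by elim: n => //= n ->; rewrite Fmap_fix. Qed.

Lemma seg0 (a b : 'I_3) : segpt (vtx a) (vtx b) 0 = (vtx a : R * R).
Proof. by rewrite /segpt subr0 !mul1r !mul0r !addr0; case: (vtx a). Qed.

Lemma seg1 (a b : 'I_3) : segpt (vtx a) (vtx b) 1 = (vtx b : R * R).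
Proof. by rewrite /segpt subrr !mul1r !mul0r !add0r; case: (vtx b). Qed.

Lemma segFa (a b : 'I_3) (s : R) :
  Fmap a (segpt (vtx a) (vtx b) s) = segpt (vtx a) (vtx b) (s / 2).
Proof. rewrite /Fmap /segpt /=; congr pair; by field. Qed.

Lemma segFb (a b : 'I_3) (s : R) :
  Fmap b (segpt (vtx a) (vtx b) s) = segpt (vtx a) (vtx b) ((1 + s) / 2).
Proof. rewrite /Fmap /segpt /=; congr pair; by field. Qed.

Lemma seg_nseq_a (a b : 'I_3) n :
  Fw (nseq n a) (vtx b) = segpt (vtx a) (vtx b) (1 / 2 ^+ n) :> R * R.
Proof.
elim: n => [|n IH] /=; first by rewrite expr0 divr1 seg1.
rewrite IH segFa exprS; congr segpt; field; by rewrite expf_neq0.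
Qed.

Lemma seg_nseq_b (a b : 'I_3) n :
  Fw (nseq n b) (vtx a) = segpt (vtx a) (vtx b) (1 - 1 / 2 ^+ n) :> R * R.
Proof.
elim: n => [|n IH] /=; first by rewrite expr0 divr1 subrr seg0.
rewrite IH segFb exprS; congr segpt; field; by rewrite expf_neq0.
Qed.


Lemma pow3_gt (C : R) : exists n : nat, C < 3 ^+ n.
Proof.
exists (Num.truncn `|C|).+1.
apply: (le_lt_trans (ler_norm C)); apply: (lt_le_trans (truncnS_gt _)).
set m := (Num.truncn `|C|).+1.
have h : (m < 3 ^ m)%N by apply: ltn_expl.
rewrite -natrX ler_nat; exact: ltnW.
Qed.

Lemma val_diff g (a b : 'I_3) : g (vtx b) - g (vtx a) = (nd g b - nd g a) / 3.
Proof. rewrite /nd; by field. Qed.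

Lemma nd_nseq_other g (a b : 'I_3) n : Hm g -> b != a ->
  nd (g \o Fw (nseq n a)) b = (3/5) ^+ n * ((nd g b + nd g a / 2) / 3 ^+ n - nd g a / 2).
Proof.
elim: n g => [|n IH] g H hba; first by rewrite !expr0 mul1r divr1; ring.
have := IH _ (Hm_comp a H) hba; rewrite /= => ->.
rewrite nd_child_same // nd_child_other // !exprS.
field; by rewrite expf_neq0.
Qed.

Lemma drift g (a b : 'I_3) : Hm g -> a != b -> 0 < nd g a ->
  exists n, g (Fw (nseq n a) (vtx b)) < g (vtx a).
Proof.
move=> H hab ha; have hba : b != a by rewrite eq_sym.
set al := nd g a; set be := nd g b.
have [n hn] := pow3_gt ((be + al / 2) / (3 * al / 2)).
exists n.
have e1 := val_diff (g \o Fw (nseq n a)) a b.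
rewrite /= Fw_nseq_fix in e1.
rewrite -subr_lt0 e1 nd_nseq_other // nd_pow // -/al -/be.
have h3 : 0 < (3 : R) ^+ n by rewrite exprn_gt0.
have h35 : 0 < (3 / 5 : R) ^+ n by rewrite exprn_gt0.
have hal : 0 < 3 * al / 2 by rewrite divr_gt0 // mulr_gt0.
rewrite ltr_pdivrMr // in hn.
set P := (3 / 5 : R) ^+ n in h35 *; set T := (3 : R) ^+ n in h3 hn *.
have : (be + al / 2) / T < 3 * al / 2.
  by rewrite ltr_pdivrMr // [_ * T]mulrC.
move=> hh.
have : P * ((be + al / 2) / T - al / 2) - P * al < 0.
  rewrite -mulrBr pmulr_rlt0 //; lra.
move=> hh2; rewrite /=; lra.
Qed.


Lemma dy_half (k : nat) m : (k%:R / 2 ^+ m) / 2 = k%:R / 2 ^+ m.+1 :> R.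
Proof. rewrite exprS; field; by rewrite expf_neq0. Qed.

Lemma dy_shift (k : nat) m : (2 ^ m <= k)%N ->
  (1 + (k - 2 ^ m)%N%:R / 2 ^+ m) / 2 = k%:R / 2 ^+ m.+1 :> R.
Proof. move=> h; rewrite natrB // natrX exprS; field; by rewrite expf_neq0. Qed.

Lemma mono_dy (a b : 'I_3) : a != b -> forall m g, Hm g -> nd g a <= 0 -> 0 <= nd g b ->
  forall k l : nat, (k <= l)%N -> (l <= 2 ^ m)%N ->
  g (segpt (vtx a) (vtx b) (k%:R / 2 ^+ m)) <= g (segpt (vtx a) (vtx b) (l%:R / 2 ^+ m)).
Proof.
move=> hab; have hba : b != a by rewrite eq_sym.
elim=> [|m IH] g H ha hb k l hkl hl.
  rewrite expn0 in hl; rewrite expr0 !divr1.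
  case: l hkl hl => [|[|l]] //; first by rewrite leqn0 => /eqP ->.
  case: k => [|[|k]] // _ _; rewrite seg0 seg1.
  have := val_diff g a b; lra.
have c1 : forall k l, (k <= l)%N -> (l <= 2 ^ m)%N ->
    g (segpt (vtx a) (vtx b) (k%:R / 2 ^+ m.+1)) <= g (segpt (vtx a) (vtx b) (l%:R / 2 ^+ m.+1)).
  move=> k' l' h1 h2; rewrite -!dy_half -!segFa.
  apply: (IH (g \o Fmap a) (Hm_comp a H)) => //.
  - by rewrite nd_child_same // pmulr_rle0.
  - by rewrite nd_child_other // divr_ge0 // subr_ge0 (le_trans ha).
have c2 : forall k l, (2 ^ m <= k)%N -> (k <= l)%N -> (l <= 2 ^ m.+1)%N ->
    g (segpt (vtx a) (vtx b) (k%:R / 2 ^+ m.+1)) <= g (segpt (vtx a) (vtx b) (l%:R / 2 ^+ m.+1)).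
  move=> k' l' h1 h2 h3.
  rewrite -(dy_shift h1) -(dy_shift (leq_trans h1 h2)) -!segFb.
  apply: (IH (g \o Fmap b) (Hm_comp b H)).
  - by rewrite nd_child_other // mulr_le0_ge0 // subr_le0 (le_trans ha).
  - by rewrite nd_child_same // mulr_ge0.
  - by rewrite leq_sub2r.
  - by rewrite leq_subLR; move: h3; rewrite expnS mul2n -addnn.
case: (leqP l (2 ^ m)) => hl1; first exact: c1.
case: (leqP (2 ^ m) k) => hk1; first exact: c2.
apply: (@le_trans _ _ (g (segpt (vtx a) (vtx b) ((2 ^ m)%N%:R / 2 ^+ m.+1)))).
  exact: c1 (ltnW hk1) (leqnn _).
exact: c2 (leqnn _) (ltnW hl1) hl.
Qed.

End A2.

Lemma cont_eps (R : realType) (K : set (R * R)) (f : R * R -> R) (x : R * R) :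
  {within K, continuous f} -> K x -> forall e : R, 0 < e ->
  exists d : R, 0 < d /\ forall y, K y -> `|x.1 - y.1| < d -> `|x.2 - y.2| < d ->
     `|f x - f y| < e.
Proof.
move=> hc Kx e e0.
have := hc x; rewrite /continuous_at.
case: (nbhs_subspaceP K x) => // _ /cvgrPdist_lt /(_ e e0).
rewrite /= near_withinE /= => /nbhs_ballP [d d0 H].
exists d; split => // y Ky h1 h2.
by apply: (H y) => //.
Qed.

Lemma closed_approx (R : realType) (K : set (R * R)) (x : R * R) :
  closed K -> (forall d : R, 0 < d -> exists y, K y /\ `|x.1 - y.1| < d /\ `|x.2 - y.2| < d) ->
  K x.
Proof.
move=> cK H; apply: cK => B /nbhs_ballP [d d0 Hd].
have [y [Ky [h1 h2]]] := H d d0.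
exists y; split => //; apply: Hd; split => //.
Qed.

Lemma compact_closed' (R : realType) (K : set (R * R)) : compact K -> closed K.
Proof. move=> cK; apply: compact_closed => //; exact: hausdorff_normed. Qed.

Lemma compact_bnd (R : realType) (K : set (R * R)) : compact K ->
  exists M : R, 0 < M /\ forall y, K y -> `|y.1| <= M /\ `|y.2| <= M.
Proof.
move=> /compact_bounded [N [_ HN]].
exists (`|N| + 1); split; first by rewrite ltr_wpDl.
move=> y Ky.
have := HN (`|N| + 1) _ y Ky.
move=> /(_ _) /=.
have hN : N < `|N| + 1 by rewrite (le_lt_trans (ler_norm N)) // ltrDl.
move=> /(_ hN).
move: (prod_normE y) => /= ->.
rewrite ge_max => /andP[] //.
Qed.

Section A3.
Variable R : realType.
Variable K : set (R * R).
Hypothesis hK : SG_attractor K.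

Lemma K_Fmap c x : K x -> K (Fmap c x).
Proof.
case: hK => _ _ hKe Kx; rewrite hKe; exists c => //; exists x => //.
Qed.

Lemma pow2_gt (C : R) : exists n : nat, C < 2 ^+ n.
Proof.
exists (Num.truncn `|C|).+1.
apply: (le_lt_trans (ler_norm C)); apply: (lt_le_trans (truncnS_gt _)).
set m := (Num.truncn `|C|).+1.
have h : (m < 2 ^ m)%N by apply: ltn_expl.
rewrite -natrX ler_nat; exact: ltnW.
Qed.

Lemma small_pow (C d : R) : 0 < d -> exists n : nat, C / 2 ^+ n < d.
Proof.
move=> d0; have [n hn] := pow2_gt (C / d); exists n.
have h2 : 0 < (2 : R) ^+ n by rewrite exprn_gt0.
by rewrite ltr_pdivrMr // mulrC -ltr_pdivrMr.
Qed.

Lemma Fw_nseq_pt i n (x : R * R) :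
  Fw (nseq n i) x = ((x.1 - (vtx i).1) / 2 ^+ n + (vtx i).1, (x.2 - (vtx i).2) / 2 ^+ n + (vtx i).2).
Proof.
elim: n => [|n IH] /=; first by rewrite !expr0 !divr1 !subrK; case: x.
rewrite IH /Fmap /= !exprS; congr pair; field; by rewrite expf_neq0.
Qed.

Lemma K_vtx i : K (vtx i).
Proof.
have [cK [x0 Kx0] _] := hK.
have hKn : forall n, K (Fw (nseq n i) x0).
  by elim=> //= n IH; apply: K_Fmap.
apply: closed_approx; first exact: compact_closed'.
move=> d d0.
have [n hn] := small_pow (`|x0.1 - (vtx i).1| + `|x0.2 - (vtx i).2|) d0.
exists (Fw (nseq n i) x0); split => //.
have h2 : 0 < (2 : R) ^+ n by rewrite exprn_gt0.
have eqv : forall a v : R, v - (a + v) = - a by move=> *; ring.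
rewrite Fw_nseq_pt /= !eqv !normrN !normrM !normfV (gtr0_norm h2).
split.
- apply: le_lt_trans hn; rewrite ler_pM2r ?invr_gt0 // lerDl //.
- apply: le_lt_trans hn; rewrite ler_pM2r ?invr_gt0 // lerDr //.
Qed.

Lemma K_junction w i : K (Fw w (vtx i)).
Proof. by elim: w => [|c w IH] /=; [exact: K_vtx | exact: K_Fmap]. Qed.


Lemma s3_le2 : Num.sqrt 3 <= 2 :> R.
Proof.
have h0 : 0 <= Num.sqrt 3 :> R by exact: sqrtr_ge0.
have h1 : Num.sqrt 3 ^+ 2 = 3 :> R by rewrite sqr_sqrtr.
nra.
Qed.

Lemma vtx_bnd i : 0 <= (vtx i : R * R).1 <= 1 /\ 0 <= (vtx i : R * R).2 <= 1.
Proof.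
have h0 : 0 <= Num.sqrt 3 :> R by exact: sqrtr_ge0.
have h := s3_le2.
rewrite /vtx; case: ifP => _ /=; last case: ifP => _ /=; split; apply/andP; split; lra.
Qed.

Lemma seg_close (a b : 'I_3) (s u : R) :
  `|(segpt (vtx a) (vtx b) s).1 - (segpt (vtx a) (vtx b) u).1| <= `|s - u| /\
  `|(segpt (vtx a) (vtx b) s).2 - (segpt (vtx a) (vtx b) u).2| <= `|s - u|.
Proof.
have [/andP[a1 a2] /andP[a3 a4]] := vtx_bnd a.
have [/andP[b1 b2] /andP[b3 b4]] := vtx_bnd b.
have e1 : (segpt (vtx a) (vtx b) s).1 - (segpt (vtx a) (vtx b) u).1 = (s - u) * ((vtx b).1 - (vtx a).1).
  by rewrite /segpt /=; ring.
have e2 : (segpt (vtx a) (vtx b) s).2 - (segpt (vtx a) (vtx b) u).2 = (s - u) * ((vtx b).2 - (vtx a).2).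
  by rewrite /segpt /=; ring.
rewrite e1 e2 !normrM; split; apply: ler_piMr => //;
  rewrite ler_norml; apply/andP; split; lra.
Qed.

Lemma dy_in_K (a b : 'I_3) m k : (k <= 2 ^ m)%N -> K (segpt (vtx a) (vtx b) (k%:R / 2 ^+ m)).
Proof.
elim: m k => [|m IH] k hk.
  rewrite expn0 in hk; rewrite expr0 divr1.
  case: k hk => [|[|k]] // _; [rewrite seg0 | rewrite seg1]; exact: K_vtx.
case: (leqP k (2 ^ m)) => h.
  rewrite -dy_half -segFa; apply: K_Fmap; exact: IH.
rewrite -(@dy_shift R _ _ (ltnW h)) -segFb; apply: K_Fmap; apply: IH.
by rewrite leq_subLR; move: hk; rewrite expnS mul2n -addnn.
Qed.

Lemma dy_approx (t : R) n : 0 <= t <= 1 ->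
  (Num.truncn (t * 2 ^+ n) <= 2 ^ n)%N /\
  (Num.truncn (t * 2 ^+ n))%:R / 2 ^+ n <= t /\
  t < (Num.truncn (t * 2 ^+ n))%:R / 2 ^+ n + 1 / 2 ^+ n.
Proof.
move=> /andP[t0 t1].
have h2 : 0 < (2 : R) ^+ n by rewrite exprn_gt0.
have tp : 0 <= t * 2 ^+ n by rewrite mulr_ge0 // ltW.
have /andP[k1 k2] := truncn_itv tp.
split.
  have : t * 2 ^+ n <= 2 ^+ n by rewrite ler_piMl.
  have e : (2 ^ n).+1%:R = 2 ^+ n + 1 :> R by rewrite -natr1 natrX.
  move=> hh; have : t * 2 ^+ n < (2 ^ n).+1%:R by rewrite e; lra.
  by rewrite truncn_le_nat.
split.
  by rewrite ler_pdivrMr.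
move: k2; rewrite -natr1; set T := (2:R) ^+ n in h2 *; set k := Num.truncn _ => k2.
rewrite -mulrDl ltr_pdivlMr // natr1; exact k2.
Qed.


Lemma seg_in_K (a b : 'I_3) (t : R) : 0 <= t <= 1 -> K (segpt (vtx a) (vtx b) t).
Proof.
move=> ht.
have [cK _ _] := hK.
apply: closed_approx; first exact: compact_closed'.
move=> d d0.
have [n hn] := small_pow 1 d0.
have [hk [h1 h2]] := dy_approx n ht.
set k := Num.truncn _ in hk h1 h2.
exists (segpt (vtx a) (vtx b) (k%:R / 2 ^+ n)); split; first exact: dy_in_K.
have [c1 c2] := seg_close a b t (k%:R / 2 ^+ n).
have hd : `|t - k%:R / 2 ^+ n| < d.
  rewrite ger0_norm; first lra.
  lra.
split; [exact: le_lt_trans c1 hd | exact: le_lt_trans c2 hd].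
Qed.

Lemma mono_real (f : R * R -> R) (a b : 'I_3) : {within K, continuous f} ->
  (forall m (k l : nat), (k <= l)%N -> (l <= 2 ^ m)%N ->
     f (segpt (vtx a) (vtx b) (k%:R / 2 ^+ m)) <= f (segpt (vtx a) (vtx b) (l%:R / 2 ^+ m))) ->
  forall s t : R, 0 <= s -> s <= t -> t <= 1 ->
     f (segpt (vtx a) (vtx b) s) <= f (segpt (vtx a) (vtx b) t).
Proof.
move=> hc hD s t s0 st t1.
rewrite leNgt; apply/negP => hlt.
set e := (f (segpt (vtx a) (vtx b) s) - f (segpt (vtx a) (vtx b) t)) / 2.
have e0 : 0 < e by rewrite divr_gt0 // subr_gt0.
have hs : 0 <= s <= 1 by apply/andP; split; lra.
have ht : 0 <= t <= 1 by apply/andP; split; lra.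
have [d1 [d10 H1]] := cont_eps hc (seg_in_K a b hs) e0.
have [d2 [d20 H2]] := cont_eps hc (seg_in_K a b ht) e0.
have dm0 : 0 < Num.min d1 d2 by rewrite lt_min d10 d20.
have [n hn] := small_pow 1 dm0.
have [hk [hk1 hk2]] := dy_approx n hs.
have [hl [hl1 hl2]] := dy_approx n ht.
set k := Num.truncn (s * _) in hk hk1 hk2.
set l := Num.truncn (t * _) in hl hl1 hl2.
have hkl : (k <= l)%N.
  apply: le_truncn; rewrite ler_pM2r // exprn_gt0 //.
have hmin1 : Num.min d1 d2 <= d1 by rewrite ge_min lexx.
have hmin2 : Num.min d1 d2 <= d2 by rewrite ge_min lexx orbT.
have hds : `|s - k%:R / 2 ^+ n| < d1.
  by rewrite ger0_norm; lra.
have hdt : `|t - l%:R / 2 ^+ n| < d2.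
  by rewrite ger0_norm; lra.
have [c1 c2] := seg_close a b s (k%:R / 2 ^+ n).
have [c3 c4] := seg_close a b t (l%:R / 2 ^+ n).
have := H1 _ (dy_in_K a b hk) (le_lt_trans c1 hds) (le_lt_trans c2 hds).
have := H2 _ (dy_in_K a b hl) (le_lt_trans c3 hdt) (le_lt_trans c4 hdt).
have := hD n k l hkl hl.
rewrite !ltr_norml => hm /andP[u1 u2] /andP[u3 u4].
rewrite /e in u1 u2 u3 u4 e0; lra.
Qed.


Lemma junction_const (g : R * R -> R) (c : R) : Hm g -> (forall l, g (vtx l) = c) ->
  forall w l, g (Fw w (vtx l)) = c.
Proof.
move=> H hc w; elim: w g H hc => [|c' w IH] g H hc l; first exact: hc.
have hS : Sg g = 3 * c.
  rewrite /Sg (eq_bigr (fun _ => c)); last by move=> i _; exact: hc.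
  by rewrite sumr_const card_ord mulr_natl.
apply: (IH (g \o Fmap c') (Hm_comp c' H)) => l'.
rewrite child_val //; case: ifP => _; rewrite ?hc ?hS //; by field.
Qed.

Lemma K_preimage x : K x -> forall n, exists w y, size w = n /\ K y /\ x = Fw w y.
Proof.
move=> Kx; elim=> [|n [w [y [hs [Ky ->]]]]]; first by exists [::], x.
have [_ _ hKe] := hK.
move: Ky; rewrite {1}hKe => -[i _ [z Kz <-]].
exists (rcons w i), z; split; first by rewrite size_rcons hs.
split => //; by rewrite /Fw -cats1 foldr_cat.
Qed.

Lemma Fw_diff w (y z : R * R) :
  (Fw w y).1 - (Fw w z).1 = (y.1 - z.1) / 2 ^+ size w /\
  (Fw w y).2 - (Fw w z).2 = (y.2 - z.2) / 2 ^+ size w.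
Proof.
elim: w => [|c w [IH1 IH2]] /=; first by rewrite !expr0 !divr1.
rewrite /Fmap /=; split.
- have -> : ((Fw w y).1 + (vtx c).1) / 2 - ((Fw w z).1 + (vtx c).1) / 2 =
    ((Fw w y).1 - (Fw w z).1) / 2 by field.
  rewrite IH1 exprS; field; by rewrite expf_neq0.
- have -> : ((Fw w y).2 + (vtx c).2) / 2 - ((Fw w z).2 + (vtx c).2) / 2 =
    ((Fw w y).2 - (Fw w z).2) / 2 by field.
  rewrite IH2 exprS; field; by rewrite expf_neq0.
Qed.

Lemma const_K (f : R * R -> R) (c : R) : Hm f -> {within K, continuous f} ->
  (forall l, f (vtx l) = c) -> forall x, K x -> f x = c.
Proof.
move=> H hc hv x Kx.
apply/eqP; apply/negPn/negP => hne.
have e0 : 0 < `|f x - c| by rewrite normr_gt0 subr_eq0.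
have [d [d0 Hd]] := cont_eps hc Kx e0.
have [cK _ _] := hK.
have [M [M0 HM]] := compact_bnd cK.
have [n hn] := small_pow (2 * M) d0.
have [w [y [hs [Ky ex]]]] := K_preimage Kx n.
have hz := K_junction w (ord0 : 'I_3).
have := Hd _ hz.
rewrite (junction_const H hv).
have [D1 D2] := Fw_diff w y (vtx ord0).
have [/andP[a1 a2] /andP[a3 a4]] := vtx_bnd (ord0 : 'I_3).
have [My1 My2] := HM y Ky.
have h2 : 0 < (2 : R) ^+ n by rewrite exprn_gt0.
have [Mv1 Mv2] := HM _ (K_vtx ord0).
have bnd : forall p q : R, `|p| <= M -> `|q| <= M -> `|(p - q) / 2 ^+ n| < d.
  move=> p q hp hq; rewrite normrM normfV (gtr0_norm h2).
  apply: le_lt_trans hn; rewrite ler_pM2r ?invr_gt0 //.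
  apply: (le_trans (ler_normB _ _)); lra.
rewrite ex D1 D2 hs => /(_ (bnd _ _ My1 Mv1) (bnd _ _ My2 Mv2)).
by rewrite ltxx.
Qed.

End A3.

Definition o1 (k : 'I_3) : 'I_3 := inord ((k.+1) %% 3).
Definition o2 (k : 'I_3) : 'I_3 := inord ((k.+2) %% 3).

Lemma o1v k : (o1 k : nat) = ((k.+1) %% 3)%N.
Proof. by rewrite /o1 inordK // ltn_pmod. Qed.
Lemma o2v k : (o2 k : nat) = ((k.+2) %% 3)%N.
Proof. by rewrite /o2 inordK // ltn_pmod. Qed.

Lemma ordeq (i j : 'I_3) : (i == j) = ((i : nat) == j).
Proof. by []. Qed.

Lemma o12 k : o1 k != o2 k.
Proof. rewrite ordeq o1v o2v; case: k => [[|[|[|k]]] Hk] //. Qed.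
Lemma o1k k : o1 k != k.
Proof. rewrite ordeq o1v; case: k => [[|[|[|k]]] Hk] //. Qed.
Lemma o2k k : o2 k != k.
Proof. rewrite ordeq o2v; case: k => [[|[|[|k]]] Hk] //. Qed.
Lemma oth k c : c != k -> (c == o1 k) || (c == o2 k).
Proof. rewrite !ordeq o1v o2v; case: k => [[|[|[|k]]] Hk] //; case: c => [[|[|[|c]]] Hc] //. Qed.
Lemma oth2 k c : c != o1 k -> c != o2 k -> c = k.
Proof. move=> h1 h2; apply/eqP/negPn/negP => h; by move: (oth h); rewrite (negbTE h1) (negbTE h2). Qed.

(* two distinct thirds k, k' : edge k = {k', v}, edge k' = {k, v} *)
Lemma edge_shared k k' : k != k' ->
  exists v : 'I_3, [/\ v != k, v != k',
    ((o1 k == k') && (o2 k == v)) || ((o1 k == v) && (o2 k == k')) &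
    ((o1 k' == k) && (o2 k' == v)) || ((o1 k' == v) && (o2 k' == k))].
Proof.
move=> hk.
exists (inord (3 - k - k')).
rewrite !ordeq !o1v !o2v inordK; last by move: hk; rewrite ordeq; case: k k' => [k Hk] [k' Hk'] /=; lia.
move: hk; rewrite ordeq.
case: k => [[|[|[|k]]] Hk] //; case: k' => [[|[|[|k']]] Hk'] //.
Qed.

Section A4.
Variable R : realType.
Variable K : set (R * R).
Hypothesis hK : SG_attractor K.
Variable f : R * R -> R.
Hypothesis Hf : Hm f.
Hypothesis hc : {within K, continuous f}.

Lemma ndv_rep x : nd_vanishes f x -> exists w e, Fw w (vtx e) = x /\ nd (f \o Fw w) e = 0.
Proof.
move=> [w [e [hx h0]]]; exists w, e; split => //.
move: h0; rewrite ndE => /eqP; rewrite mulf_eq0 expf_eq0 => /orP[/andP[_ /eqP h]|/eqP //].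
by move: h => /eqP; rewrite mulf_eq0 invr_eq0 !pnatr_eq0.
Qed.

Lemma contour_rep x : on_contour x -> nd_vanishes f x ->
  exists k w e, [/\ onedge (o1 k) (o2 k) w, (e == o1 k) || (e == o2 k),
    nd (f \o Fw w) e = 0 & Fw w (vtx e) = x].
Proof.
move=> [a [b [hab [t [_ hx]]]]] /ndv_rep [w [e [hwe h0]]].
have [k [hbk hak]] := third hab.
have hl : lam k x = 0 by rewrite hx lam_segpt (negbTE hbk) (negbTE hak) !mulr0 addr0.
move: hl; rewrite -hwe => /lam_eq0 /andP[hw he].
exists k, w, e; split => //; last exact: oth.
by apply: sub_all hw => c /=; exact: oth.
Qed.


Hypothesis hnc : exists x y, K x /\ K y /\ f x != f y.

Lemma not_all_zero : ~ (forall l, nd f l = 0).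
Proof.
move=> hz.
have hv : forall l, f (vtx l) = Sg f / 3.
  move=> l; have := hz l; rewrite /nd => h; lra.
have [x [y [Kx [Ky hne]]]] := hnc.
by move: hne; rewrite (const_K hK Hf hc hv Kx) (const_K hK Hf hc hv Ky) eqxx.
Qed.

Lemma nz_pair a b : a != b -> 0 < nd f a ^+ 2 + nd f b ^+ 2.
Proof.
move=> hab; rewrite ltNge; apply/negP => hle.
have ha : nd f a = 0 by nra.
have hb : nd f b = 0 by nra.
have [k [hbk hak]] := third hab.
have hs := nd_sum f; rewrite (sum3 _ hab hbk hak) ha hb !add0r in hs.
apply: not_all_zero => l.
case: (eqVneq l a) => [->//|hla]; case: (eqVneq l b) => [->//|hlb].
have : (l != a) && (l != b) by rewrite hla hlb.
by rewrite (ord3_pred l hab hbk hak) => /eqP ->.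
Qed.

Lemma part1 x y : on_contour x -> nd_vanishes f x -> on_contour y -> nd_vanishes f y -> x = y.
Proof.
move=> cx vx cy vy.
have [k [w [e [hw he h0 hx]]]] := contour_rep cx vx.
have [k' [w' [e' [hw' he' h0' hy]]]] := contour_rep cy vy.
case: (eqVneq k k') => [ekk|nkk].
  subst k'; rewrite -hx -hy.
  exact: (uniq_all (o12 k) Hf (nz_pair (o12 k)) (leqnn _) hw hw' he he' h0 h0').
have [v [hvk hvk' E1 E2]] := edge_shared nkk.
have p1 := zero_nonneg (o12 k) Hf hw he h0.
have p2 := zero_nonneg (o12 k') Hf hw' he' h0'.
have hkk' : k != k' := nkk.
have hk'v : k' != v by rewrite eq_sym.
have hkv : k != v by rewrite eq_sym.
have hs := nd_sum f; rewrite (sum3 _ hkk' hk'v hkv) in hs.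
have q1 : 0 <= nd f k' * nd f v /\ ((v == o1 k) || (v == o2 k)).
  by move: E1 p1 => /orP[] /andP[/eqP e1 /eqP e2]; rewrite e1 e2 ?eqxx ?orbT // mulrC.
have q2 : 0 <= nd f k * nd f v /\ ((v == o1 k') || (v == o2 k')).
  by move: E2 p2 => /orP[] /andP[/eqP e1 /eqP e2]; rewrite e1 e2 ?eqxx ?orbT // mulrC.
case: q1 q2 => [r1 m1] [r2 m2].
have hv0 : nd f v = 0 by nra.
have X : x = vtx v.
  rewrite -hx; apply: (uniq_all (w' := [::]) (o12 k) Hf (nz_pair (o12 k)) (leqnn _) hw _ he m1 h0) => //.
have Y : y = vtx v.
  rewrite -hy; apply: (uniq_all (w' := [::]) (o12 k') Hf (nz_pair (o12 k')) (leqnn _) hw' _ he' m2 h0') => //.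
by rewrite X Y.
Qed.


Lemma vertex_nd i : nd_vanishes f (vtx i) -> nd f i = 0.
Proof.
move=> /ndv_rep [w [e [hx h0]]].
have l1 : lam (o1 i) (Fw w (vtx e) : R * R) = 0 by rewrite hx lam_vtx eq_sym (negbTE (o1k i)).
have l2 : lam (o2 i) (Fw w (vtx e) : R * R) = 0 by rewrite hx lam_vtx eq_sym (negbTE (o2k i)).
move: l1 l2 => /lam_eq0 /andP[w1 e1] /lam_eq0 /andP[w2 e2].
have ei : e = i by exact: oth2.
have : all (pred1 i) w.
  apply/allP => c hcw /=; apply/eqP; apply: oth2.
  - by move/allP: w1 => /(_ c hcw).
  - by move/allP: w2 => /(_ c hcw).
move=> /all_pred1P hw.
move: h0; rewrite ei hw nd_pow // => /eqP; rewrite mulf_eq0 expf_eq0 => /orP[/andP[_ /eqP h]|/eqP //].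
by move: h => /eqP; rewrite mulf_eq0 invr_eq0 !pnatr_eq0.
Qed.

Lemma cont_neg : {within K, continuous (fun x => - f x)}.
Proof. by move=> x; apply: cvgN; exact: hc x. Qed.

Lemma part2a i : nd f i = 0 -> forall a b, a != b -> edge_monotone f a b.
Proof.
move=> hi a b hab.
have [k [hbk hak]] := third hab.
have hs := nd_sum f; rewrite (sum3 _ hab hbk hak) in hs.
have hp : nd f a * nd f b <= 0.
  case: (eqVneq i a) => [ia|hia]; first by rewrite -ia hi mul0r.
  case: (eqVneq i b) => [ib|hib]; first by rewrite -ib hi mulr0.
  have : (i != a) && (i != b) by rewrite hia hib.
  rewrite (ord3_pred i hab hbk hak) => /eqP ik; rewrite ik in hi; nra.
have : (nd f a <= 0 /\ 0 <= nd f b) \/ (0 <= nd f a /\ nd f b <= 0).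
  case: (lerP (nd f a) 0) => ha; case: (lerP 0 (nd f b)) => hb.
  - by left.
  - by right; split; [nra | exact: ltW].
  - by right; split; [exact: ltW | nra].
  - by right; split; [exact: ltW | exact: ltW].
case=> [[ha hb]|[ha hb]].
- left; apply: (mono_real hK hc) => m k' l hkl hl.
  exact: (mono_dy hab Hf ha hb hkl hl).
- right => s t s0 st t1.
  have Hn := Hm_neg Hf.
  have ha' : nd (fun x => - f x) a <= 0 by rewrite nd_neg oppr_le0.
  have hb' : 0 <= nd (fun x => - f x) b by rewrite nd_neg oppr_ge0.
  have := mono_real hK cont_neg (fun m k' l hkl hl => mono_dy hab Hn ha' hb' hkl hl) s0 st t1.
  by rewrite lerN2.
Qed.

Lemma not_mono a b : a != b -> 0 < nd f a * nd f b -> ~ edge_monotone f a b.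
Proof.
move=> hab hp; have hba : b != a by rewrite eq_sym.
have p1 : forall m : nat, 0 <= 1 / (2 : R) ^+ m <= 1.
  move=> m; have h : 1 <= (2 : R) ^+ m by rewrite exprn_ege1 // ler1n.
  apply/andP; split; first by rewrite divr_ge0 // exprn_ge0.
  by rewrite ler_pdivrMr ?mul1r // (lt_le_trans ltr01 h).
have hn := Hm_neg Hf.
have hna : nd f a != 0 by apply/eqP => h; move: hp; rewrite h mul0r ltxx.
move=> [hinc|hdec].
- case: (ltrP 0 (nd f a)) => ha.
    have [m hm] := drift Hf hab ha.
    have [q1 q2] := andP (p1 m).
    have := hinc 0 (1 / 2 ^+ m) (lexx 0) q1 q2.
    rewrite seg0 -seg_nseq_a; lra.
  have hb : 0 < nd (fun x => - f x) b by rewrite nd_neg oppr_gt0; nra.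
  have [m hm] := drift hn hba hb.
  have [q1 q2] := andP (p1 m).
  have r1 : 0 <= 1 - 1 / 2 ^+ m :> R by lra.
  have r2 : 1 - 1 / 2 ^+ m <= 1 :> R by lra.
  have := hinc (1 - 1 / 2 ^+ m) 1 r1 r2 (lexx 1).
  rewrite seg1 -seg_nseq_b /=; move: hm => /=; lra.
- case: (ltrP 0 (nd f a)) => ha.
    have hb : 0 < nd f b by nra.
    have [m hm] := drift Hf hba hb.
    have [q1 q2] := andP (p1 m).
    have r1 : 0 <= 1 - 1 / 2 ^+ m :> R by lra.
    have r2 : 1 - 1 / 2 ^+ m <= 1 :> R by lra.
    have := hdec (1 - 1 / 2 ^+ m) 1 r1 r2 (lexx 1).
    rewrite seg1 -seg_nseq_b; lra.
  have ha' : 0 < nd (fun x => - f x) a by rewrite nd_neg oppr_gt0 lt_neqAle hna.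
  have [m hm] := drift hn hab ha'.
  have [q1 q2] := andP (p1 m).
  have := hdec 0 (1 / 2 ^+ m) (lexx 0) q1 q2.
  rewrite seg0 -seg_nseq_a; move: hm => /=; lra.
Qed.

Lemma part2b : (forall a b, a != b -> edge_monotone f a b) -> exists i, nd f i = 0.
Proof.
move=> hm.
set k : 'I_3 := ord0.
have d1 : k != o1 k by rewrite eq_sym o1k.
have d2 : o1 k != o2 k := o12 k.
have d3 : k != o2 k by rewrite eq_sym o2k.
have hs := nd_sum f; rewrite (sum3 _ d1 d2 d3) in hs.
case: (eqVneq (nd f k) 0) => [h|h0]; first by exists k.
case: (eqVneq (nd f (o1 k)) 0) => [h|h1]; first by exists (o1 k).
case: (eqVneq (nd f (o2 k)) 0) => [h|h2]; first by exists (o2 k).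
exfalso.
case: (ltrP 0 (nd f k * nd f (o1 k))) => p1; first exact: (not_mono d1 p1 (hm _ _ d1)).
case: (ltrP 0 (nd f k * nd f (o2 k))) => p2; first exact: (not_mono d3 p2 (hm _ _ d3)).
case: (ltrP 0 (nd f (o1 k) * nd f (o2 k))) => p3; first exact: (not_mono d2 p3 (hm _ _ d2)).
move: h0 h1 h2; rewrite !neq_lt => /orP[] ? /orP[] ? /orP[] ?; nra.
Qed.

End A4.

Unset Implicit Arguments.

Theorem theorem5 (R : realType) (K : set (R * R)) (hK : SG_attractor K)
    (f : R * R -> R) (hf : sg_harmonic K f)
    (hnc : exists x y, K x /\ K y /\ f x != f y) :
  (forall x y : R * R,
      junction_point x -> on_contour x -> nd_vanishes f x ->
      junction_point y -> on_contour y -> nd_vanishes f y -> x = y) /\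
  ((exists i : 'I_3, nd_vanishes f (vtx i)) <->
     (forall a b : 'I_3, a != b -> edge_monotone f a b)).
Proof.
case: hf => hc Hf0.
have Hf : Hm f := Hf0.
split.
  move=> x y _ cx vx _ cy vy.
  exact: (part1 hK Hf hc hnc cx vx cy vy).
split.
  move=> [i hi]; apply: (part2a hK Hf hc (i := i)).
  exact: (vertex_nd Hf hi).
move=> hm; have [i hi] := part2b Hf hm.
exists i, [::], i; split => //.
by rewrite ndE /= expr0 mul1r.
Qed.
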